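(* Let $\sigma$ be a signature, $\Delta$ a set of $\mathcal{CO}[\sigma]$-formulas and $\varphi$ a $\mathcal{COD}[\sigma]$-formula. Then $\Delta\models^g\varphi$ if and only if $\Delta\models^g\varphi^\ast_f$ for some full instantiation $\varphi^\ast_f$ of $\varphi^\ast$.
   Context: A signature $\sigma=(\mathrm{Dom},\mathrm{Ran})$: $\mathrm{Dom}$ nonempty finite set of variables, each with nonempty finite range $\mathrm{Ran}(X)$; $\mathbf X=\mathbf x$ abbreviates $X_1=x_1\wedge\dots\wedge X_n=x_n$ ($\mathbf x\in\mathrm{Ran}(\mathbf X)=\prod\mathrm{Ran}(X_i)$), inconsistent if it contains $X=x,X=x'$ with $x\ne x'$. $\mathcal{CO}[\sigma]$: $\alpha::=X=x\mid\neg\alpha\mid\alpha\wedge\alpha\mid\alpha\vee\alpha\mid\mathbf X=\mathbf x\;\Box\!\!\rightarrow\alpha$. $\mathcal{COD}[\sigma]$: $\varphi::=X=x\mid{=}(\mathbf X;Y)\mid\neg\alpha\mid\varphi\wedge\varphi\mid\varphi\vee\varphi\mid\mathbf X=\mathbf x\;\Box\!\!\rightarrow\varphi$ ($\alpha\in\mathcal{CO}[\sigma]$); ${=}(Y)$ is ${=}(\mathbf X;Y)$ with empty $\mathbf X$ (constancy atom). Systems of functions $\mathcal F$: for each $V\in\mathrm{En}(\mathcal F)\subseteq\mathrm{Dom}$ parents $PA^{\mathcal F}_V\subseteq\mathrm{Dom}\setminus\{V\}$ and $\mathcal F_V:\mathrm{Ran}(PA^{\mathcal F}_V)\to\mathrm{Ran}(V)$;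 $\mathrm{Ex}(\mathcal F)=\mathrm{Dom}\setminus\mathrm{En}(\mathcal F)$; only recursive (acyclic parent graph). An assignment $s$ is compatible with $\mathcal F$ if $s(V)=\mathcal F_V(s(PA^{\mathcal F}_V))$ for $V\in\mathrm{En}(\mathcal F)$. A generalized causal team is a set $T$ of compatible pairs $(s,\mathcal F)$; $T^-=\{s:(s,\mathcal F)\in T\}$. For consistent $\mathbf X=\mathbf x$: $\mathcal F_{\mathbf X=\mathbf x}$ restricts $\mathcal F$ to $\mathrm{En}(\mathcal F)\setminus\mathbf X$; $s^{\mathcal F}_{\mathbf X=\mathbf x}$: $X_i\mapsto x_i$, $V\mapsto s(V)$ on $\mathrm{Ex}(\mathcal F)\setminus\mathbf X$, $V\mapsto\mathcal F_V(s^{\mathcal F}_{\mathbf X=\mathbf x}(PA^{\mathcal F}_V))$ on $\mathrm{En}(\mathcal F)\setminus\mathbf X$; $T_{\mathbf X=\mathbf x}=\{(s^{\mathcal F}_{\mathbf X=\mathbf x},\mathcal F_{\mathbf X=\mathbf x}):(s,\mathcal F)\in T\}$. $\models^g$: $T\models X=x$ iff $s(X)=x$ for all $s\in T^-$; $T\models{=}(\mathbf X;Y)$ iff for all $s,s'\in T^-$, $s(\mathbf X)=s'(\mathbf X)$ implies $s(Y)=s'(Y)$; $T\models\neg\alpha$ iff $\{(s,\mathcal F)\}\not\models\alpha$ for all $(s,\mathcal F)\in T$; $\wedge$ classical; $T\models\varphi\vee\psi$ iff $T=T_1\cup T_2$ with $T_1\models\varphi$, $T_2\models\psi$; $T\models\mathbf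 X=\mathbf x\;\Box\!\!\rightarrow\varphi$ iff $\mathbf X=\mathbf x$ inconsistent or $T_{\mathbf X=\mathbf x}\models\varphi$. $\Delta\models^g\varphi$: every generalized causal team over $\sigma$ satisfying all of $\Delta$ satisfies $\varphi$. $\varphi^\ast$ is obtained from $\varphi$ by replacing every occurrence of a dependence atom ${=}(\mathbf X;Y)$ by $\bigvee_{\mathbf x\in\mathrm{Ran}(\mathbf X)}(\mathbf X=\mathbf x\wedge{=}(Y))$ (so all dependence atoms in $\varphi^\ast$ are constancy atoms). Let $\mathbf d=\langle[{=}(X_1),k_1],\dots,[{=}(X_n),k_n]\rangle$ list all occurrences of constancy atoms in $\varphi^\ast$ ($[{=}(X_i),k_i]$ the $k_i$-th occurrence of ${=}(X_i)$). An instantiating function is $f:\{1,\dots,n\}\to\bigcup_i\mathrm{Ran}(X_i)$ with $f(i)\in\mathrm{Ran}(X_i)$; the full instantiation $\varphi^\ast_f$ is obtained from $\varphi^\ast$ by replacing each occurrence $[{=}(X_i),k_i]$ by $X_i=f(i)$ (a $\mathcal{CO}[\sigma]$-formula). *)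

(* Defs.v *)
From mathcomp Require Import all_boot.
Set Implicit Arguments. Unset Strict Implicit. Unset Printing Implicit Defensive.

(* Causal teams with dependence atoms: generalized causal team semantics.
   Signature: a finite type of variables V (= Dom) and, for each X : V, a
   finite type Ran X of its values. *)

Section CausalTeams.
Variable V : finType.
Variable Ran : V -> finType.

Definition lit := {X : V & Ran X}.

(* Syntax of CO[sigma]. The list l in [CCf l a] is X = x (X1=x1 /\ ... /\ Xn=xn). *)
Inductive co : Type :=
  | CEq (X : V) (x : Ran X)
  | CNeg (a : co)
  | CAnd (a b : co)
  | COr (a b : co)
  | CCf (l : seq lit) (a : co).

(* Syntax of COD[sigma]; [DDep Xs Y] is =(Xs;Y), [DDep [::] Y] is =(Y). *)
Inductive cod : Type :=
  | DEq (X : V) (x : Ran X)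
  | DDep (Xs : seq V) (Y : V)
  | DNeg (a : co)
  | DAnd (p q : cod)
  | DOr (p q : cod)
  | DCf (l : seq lit) (p : cod).

Definition assign := forall X : V, Ran X.

(* Systems of functions: [en X] says X is endogenous, [pa X] are the parents
   of X, and [fn X] is F_X, given as a function of the whole assignment that
   only depends on the parents (see [wf_system]). *)
Record system := System {
  en : V -> bool;
  pa : V -> V -> bool;   (* pa X Y : Y is a parent of X *)
  fn : forall X : V, assign -> Ran X }.

Definition wf_system (F : system) : Prop :=
  (forall X, ~~ pa F X X) /\
  (forall X (s s' : assign), (forall Y, pa F X Y -> s Y = s' Y) ->
       fn F X s = fn F X s') /\
  (* recursive: the parent graph (on endogenous variables) is acyclic *)
  well_founded (fun Y X => en F X && pa F X Y).

Definition compatible (s : assign) (F : system) : Prop :=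
  forall X, en F X -> s X = fn F X s.

Definition team := assign * system -> Prop.

Definition gct (T : team) : Prop :=
  forall p, T p -> wf_system p.2 /\ compatible p.1 p.2.

Definition team_minus (T : team) (s : assign) : Prop := exists F, T (s, F).

Definition consistent (l : seq lit) : Prop :=
  forall u v, u \in l -> v \in l -> tag u = tag v -> u = v.

Definition intv_sys (F : system) (l : seq lit) : system :=
  System (fun X => en F X && (X \notin map tag l)) (pa F) (fn F).

(* t = s^F_{X=x}, as the solution of its defining (recursive) equations *)
Definition intv_assign (F : system) (l : seq lit) (s t : assign) : Prop :=
  forall X,
    (forall x : Ran X, existT _ X x \in l -> t X = x) /\
    (X \notin map tag l -> ~~ en F X -> t X = s X) /\
    (X \notin map tag l -> en F X -> t X = fn F X t).

Definition team_intv (T : team) (l : seq lit) : team :=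
  fun p => exists s F, T (s, F) /\ p.2 = intv_sys F l /\ intv_assign F l s p.1.

Definition team_union (T T1 T2 : team) : Prop :=
  forall p, T p <-> T1 p \/ T2 p.

Fixpoint sat_co (T : team) (a : co) {struct a} : Prop :=
  match a with
  | CEq X x => forall s, team_minus T s -> s X = x
  | CNeg b => forall p, T p -> ~ sat_co (fun q => q = p) b
  | CAnd b c => sat_co T b /\ sat_co T c
  | COr b c => exists T1 T2, team_union T T1 T2 /\ sat_co T1 b /\ sat_co T2 c
  | CCf l b => ~ consistent l \/ sat_co (team_intv T l) b
  end.

Fixpoint sat (T : team) (p : cod) {struct p} : Prop :=
  match p with
  | DEq X x => forall s, team_minus T s -> s X = x
  | DDep Xs Y => forall s s', team_minus T s -> team_minus T s' ->
        (forall X, X \in Xs -> s X = s' X) -> s Y = s' Y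
  | DNeg b => forall q, T q -> ~ sat_co (fun r => r = q) b
  | DAnd p1 p2 => sat T p1 /\ sat T p2
  | DOr p1 p2 => exists T1 T2, team_union T T1 T2 /\ sat T1 p1 /\ sat T2 p2
  | DCf l p1 => ~ consistent l \/ sat (team_intv T l) p1
  end.

Definition entails_co (Delta : co -> Prop) (a : co) : Prop :=
  forall T, gct T -> (forall b, Delta b -> sat_co T b) -> sat_co T a.

Definition entails (Delta : co -> Prop) (p : cod) : Prop :=
  forall T, gct T -> (forall b, Delta b -> sat_co T b) -> sat T p.

(* Ran(Xs) : all tuples of values, as lists of literals X1=x1,...,Xn=xn *)
Fixpoint ranL (Xs : seq V) : seq (seq lit) :=
  match Xs with
  | [::] => [:: [::]]
  | X :: Xs' => [seq (existT _ X x : lit) :: r | x <- enum (Ran X), r <- ranL Xs']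
  end.

Fixpoint bigAnd (a : cod) (l : seq cod) : cod :=
  match l with [::] => a | b :: l' => DAnd a (bigAnd b l') end.
Fixpoint bigOr (a : cod) (l : seq cod) : cod :=
  match l with [::] => a | b :: l' => DOr a (bigOr b l') end.

Definition lit_atom (u : lit) : cod := DEq (tagged u).

Definition eq_and_const (r : seq lit) (Y : V) : cod :=
  match r with
  | [::] => DDep [::] Y
  | u :: r' => DAnd (bigAnd (lit_atom u) (map lit_atom r')) (DDep [::] Y)
  end.

Fixpoint star (p : cod) : cod :=
  match p with
  | DEq X x => DEq x
  | DDep [::] Y => DDep [::] Y
  | DDep Xs Y =>
      match ranL Xs with
      | [::] => DDep [::] Y   (* impossible: all ranges are nonempty *)
      | r :: rs => bigOr (eq_and_const r Y) (map (fun r' => eq_and_const r' Y) rs)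
      end
  | DNeg a => DNeg a
  | DAnd p1 p2 => DAnd (star p1) (star p2)
  | DOr p1 p2 => DOr (star p1) (star p2)
  | DCf l p1 => DCf l (star p1)
  end.

(* [full_inst p a] : a is a full instantiation of p, i.e. a is obtained from p
   by replacing each occurrence of a constancy atom =(X) by some X = x
   (independently for each occurrence), which is exactly p_f for some
   instantiating function f. *)
Inductive full_inst : cod -> co -> Prop :=
  | FI_Eq X (x : Ran X) : full_inst (DEq x) (CEq x)
  | FI_Const Y (y : Ran Y) : full_inst (DDep [::] Y) (CEq y)
  | FI_Neg a : full_inst (DNeg a) (CNeg a)
  | FI_And p1 p2 a1 a2 : full_inst p1 a1 -> full_inst p2 a2 ->
      full_inst (DAnd p1 p2) (CAnd a1 a2)
  | FI_Or p1 p2 a1 a2 : full_inst p1 a1 -> full_inst p2 a2 ->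
      full_inst (DOr p1 p2) (COr a1 a2)
  | FI_Cf l p1 a1 : full_inst p1 a1 -> full_inst (DCf l p1) (CCf l a1).

End CausalTeams.

(* Main.v *)
Require Import Defs.
From mathcomp Require Import all_boot.
From Stdlib Require Import Classical.
Set Implicit Arguments. Unset Strict Implicit.

Lemma flat {V : finType} {Ran : V -> finType} (a : co Ran) : forall T,
  sat_co T a <-> forall p, T p -> sat_co (fun q => q = p) a.
Proof.
elim: a => [X x|b IH|b IHb c IHc|b IHb c IHc|l b IH] T /=.
- split.
  + move=> H p Tp s [F E]; apply: H; exists F; by rewrite E.
  + move=> H s [F TF]; exact: (H _ TF s (ex_intro _ F erefl)).
- split.
  + move=> H p Tp q Eq; subst q; exact: H.
  + move=> H p Tp; exact: (H p Tp p erefl).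
- split.
  + move=> [H1 H2] p Tp; split; [move: H1; rewrite IHb | move: H2; rewrite IHc]; apply; done.
  + move=> H; split; [rewrite IHb|rewrite IHc] => p Tp; case: (H p Tp) => //.
- split.
  + move=> [T1 [T2 [U [H1 H2]]]] p Tp.
    case: ((U p).1 Tp) => Tip.
    * exists (fun q => q = p), (fun _ => False); split; first by move=> q; split; [left|case].
      split; last by rewrite IHc.
      by move: H1; rewrite IHb => H1; exact: H1.
    * exists (fun _ => False), (fun q => q = p); split; first by move=> q; split; [right|case].
      split; first by rewrite IHb.
      by move: H2; rewrite IHc => H2; exact: H2.
  + move=> H.
    exists (fun p => T p /\ sat_co (fun q => q = p) b),
           (fun p => T p /\ sat_co (fun q => q = p) c).
    split; last split.
    * move=> p; split; last by case=> [][].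
      move=> Tp; case: (H p Tp) => [T1 [T2 [U [H1 H2]]]].
      case: ((U p).1 erefl) => Tip.
      -- left; split=> //; move: H1; rewrite IHb; exact.
      -- right; split=> //; move: H2; rewrite IHc; exact.
    * by rewrite IHb => p [].
    * by rewrite IHc => p [].
- split.
  + case=> [nc|H] p Tp; first by left.
    right; rewrite IH => q [s [F [E [E2 E3]]]].
    move: H; rewrite IH; apply; exists s, F; split=> //; by rewrite E.
  + move=> H; case: (classic (consistent l)) => cl; last by left.
    right; rewrite IH => q [s [F [TF [E2 E3]]]].
    case: (H _ TF) => // H'.
    move: H'; rewrite IH; apply; by exists s, F.
Qed.
Definition sats {V : finType} {Ran : V -> finType} (s : assign Ran) (r : seq (lit Ran)) :=
  forall u, u \in r -> s (tag u) = tagged u.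

Definition tup {V : finType} {Ran : V -> finType} (s : assign Ran) (Xs : seq V) : seq (lit Ran) :=
  [seq (existT _ X (s X) : lit Ran) | X <- Xs].

Lemma ranL_tag {V : finType} {Ran : V -> finType} (Xs : seq V) r :
  r \in ranL Ran Xs -> map tag r = Xs.
Proof.
elim: Xs r => [|X Xs IH] r /=; first by rewrite inE => /eqP ->.
by case/allpairsP => [[x r']] /= [_ Hr ->] /=; rewrite (IH _ Hr).
Qed.

Lemma tup_ranL {V : finType} {Ran : V -> finType} (s : assign Ran) (Xs : seq V) :
  tup s Xs \in ranL Ran Xs.
Proof.
elim: Xs => [|X Xs IH] /=; first by rewrite inE.
by apply/allpairsP; exists (s X, tup s Xs); rewrite mem_enum.
Qed.

Lemma ranL_sats {V : finType} {Ran : V -> finType} (s : assign Ran) (Xs : seq V) r :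
  r \in ranL Ran Xs -> sats s r -> r = tup s Xs.
Proof.
elim: Xs r => [|X Xs IH] r /=; first by rewrite inE => /eqP ->.
case/allpairsP => [[x r']] /= [_ Hr ->] Hs.
have -> : s X = x by apply: (Hs (existT _ X x)); rewrite inE eqxx.
congr cons; apply: IH => // u ur; apply: Hs; by rewrite inE ur orbT.
Qed.

Lemma ranL_uniq {V : finType} {Ran : V -> finType} (Xs : seq V) :
  uniq (ranL Ran Xs).
Proof.
elim: Xs => [|X Xs IH] //=.
apply: allpairs_uniq => //; first exact: enum_uniq.
move=> [x r] [x1 r1] _ _ /= [] E ->; by rewrite (eq_from_Tagged E).
Qed.

Lemma star_dep_eq {V : finType} {Ran : V -> finType} X Xs Y :
  star (@DDep V Ran (X :: Xs) Y) =
  match ranL Ran (X :: Xs) with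
  | [::] => DDep Ran [::] Y
  | r :: rs => bigOr (eq_and_const r Y) (map (fun r' => eq_and_const r' Y) rs)
  end.
Proof. by []. Qed.

Lemma inst_sound {V : finType} {Ran : V -> finType} (p : cod Ran) a :
  full_inst p a -> forall T, sat_co T a -> sat T p.
Proof.
elim=> {p a} /=.
- by [].
- by move=> Y y T H s s' Hs Hs'; rewrite (H _ Hs) (H _ Hs').
- by [].
- by move=> p1 p2 a1 a2 _ IH1 _ IH2 T [/IH1 ? /IH2 ?].
- move=> p1 p2 a1 a2 _ IH1 _ IH2 T [T1 [T2 [U [/IH1 ? /IH2 ?]]]].
  by exists T1, T2.
- by move=> l p1 a1 _ IH T [?|/IH ?]; [left|right].
Qed.

Lemma union_tm {V : finType} {Ran : V -> finType} (T T1 T2 : team Ran) s :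
  team_union T T1 T2 -> team_minus T s -> team_minus T1 s \/ team_minus T2 s.
Proof. by move=> U [F /U [H|H]]; [left|right]; exists F. Qed.

Lemma bigAnd_sats {V : finType} {Ran : V -> finType} (T : team Ran) u r :
  sat T (bigAnd (lit_atom u) (map (@lit_atom _ _) r)) -> forall s, team_minus T s -> sats s (u :: r).
Proof.
elim: r u => [|v r IH] u /=.
- move=> H s Hs w; rewrite inE => /eqP ->; exact: H.
- move=> [H1 H2] s Hs w; rewrite inE => /orP [/eqP ->|wr]; first exact: H1.
  exact: (IH v H2 s Hs).
Qed.

Lemma eqc_sound {V : finType} {Ran : V -> finType} (T : team Ran) r Y :
  sat T (eq_and_const r Y) ->
  (forall s, team_minus T s -> sats s r) /\
  (forall s s', team_minus T s -> team_minus T s' -> s Y = s' Y).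
Proof.
case: r => [|u r] /=.
- move=> H; split=> [s _ u //|s s' Hs Hs']; exact: (H s s' Hs Hs').
- move=> [H1 H2]; split; last by move=> s s' Hs Hs'; exact: (H2 s s' Hs Hs').
  exact: bigAnd_sats H1.
Qed.

Lemma bigOr_sats {V : finType} {Ran : V -> finType} Y rs : forall (T : team Ran) r0,
  sat T (bigOr (eq_and_const r0 Y) (map (fun r' => eq_and_const r' Y) rs)) ->
  forall s, team_minus T s -> exists2 r, r \in r0 :: rs & sats s r.
Proof.
elim: rs => [|r1 rs IH] T r0 /=.
- move=> /eqc_sound [H _] s Hs; exists r0; [exact: mem_head | exact: H].
- move=> [T1 [T2 [U [H1 H2]]]] s Hs.
  case: (union_tm U Hs) => Hs'.
  + exists r0; [exact: mem_head | exact: (eqc_sound H1).1].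
  + case: (IH _ _ H2 s Hs') => r Hr Hsr; exists r => //.
    by rewrite inE Hr orbT.
Qed.

Lemma dep_sound {V : finType} {Ran : V -> finType} Xs Y rs : forall (T : team Ran) r0,
  uniq (r0 :: rs) -> {subset r0 :: rs <= ranL Ran Xs} ->
  sat T (bigOr (eq_and_const r0 Y) (map (fun r' => eq_and_const r' Y) rs)) ->
  sat T (DDep Ran Xs Y).
Proof.
elim: rs => [|r1 rs IH] T r0 Hu Hsub /=.
- by move=> /eqc_sound [_ H] s s' Hs Hs' _; exact: (H s s' Hs Hs').
- move=> [T1 [T2 [U [H1 H2]]]] s s' Hs Hs' Hag.
  have Htup : tup s Xs = tup s' Xs by rewrite /tup; apply/eq_in_map => X /Hag ->.
  have Hr0 : r0 \in ranL Ran Xs by apply: Hsub; exact: mem_head.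
  have mixed : forall t t', team_minus T1 t -> team_minus T2 t' -> tup t Xs = tup t' Xs -> False.
    move=> t t' Ht Ht' Et.
    have E0 : r0 = tup t Xs := ranL_sats Hr0 ((eqc_sound H1).1 t Ht).
    case: (bigOr_sats H2 Ht') => r Hr Hsr.
    have Hrr : r \in ranL Ran Xs by apply: Hsub; rewrite inE Hr orbT.
    have E1 : r = tup t' Xs := ranL_sats Hrr Hsr.
    move: Hu => /= /andP [Hn _]; move/negP: Hn; apply.
    by rewrite E0 Et -E1.
  case: (union_tm U Hs) => Hs1; case: (union_tm U Hs') => Hs1'.
  + exact: (eqc_sound H1).2.
  + by case: (mixed _ _ Hs1 Hs1' Htup).
  + by case: (mixed _ _ Hs1' Hs1 (esym Htup)).
  + apply: (IH T2 r1) => //.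
    * by move: Hu => /= /andP [_].
    * by move=> r Hr; apply: Hsub; rewrite inE Hr orbT.
Qed.

Lemma star_sound {V : finType} {Ran : V -> finType} (phi : cod Ran) : forall T,
  sat T (star phi) -> sat T phi.
Proof.
elim: phi => [X x|Xs Y|a|p1 IH1 p2 IH2|p1 IH1 p2 IH2|l p1 IH] T.
- by [].
- case: Xs => [|X Xs] //; rewrite star_dep_eq.
  case E: (ranL Ran (X :: Xs)) => [|r rs].
  + by move=> H s s' Hs Hs' _; exact: (H s s' Hs Hs').
  + move=> H; apply: (dep_sound (Xs := X :: Xs) _ _ H).
    * rewrite -E; exact: ranL_uniq.
    * by rewrite E.
- by [].
- by case=> /IH1 ? /IH2 ?.
- by case=> [T1 [T2 [U [/IH1 ? /IH2 ?]]]]; exists T1, T2.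
- by case=> [?|/IH ?]; [left|right].
Qed.

Lemma empty_sat {V : finType} {Ran : V -> finType} (phi : cod Ran) : forall T,
  (forall p, ~ T p) -> sat T phi.
Proof.
elim: phi => [X x|Xs Y|a|p1 IH1 p2 IH2|p1 IH1 p2 IH2|l p1 IH] T HT /=.
- by move=> s [F /HT].
- by move=> s s' [F /HT].
- by move=> q /HT.
- by split; [apply: IH1|apply: IH2].
- exists T, T; split; first by move=> p; split; [left|case].
  by split; [apply: IH1|apply: IH2].
- right; apply: IH => p [s [F [/HT []]]].
Qed.

Lemma const_inst {V : finType} {Ran : V -> finType} (HRan : forall X : V, 0 < #|Ran X|)
  (T : team Ran) Y :
  (forall s s', team_minus T s -> team_minus T s' -> s Y = s' Y) ->
  exists y : Ran Y, forall s, team_minus T s -> s Y = y.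
Proof.
move=> H; case: (classic (exists s0, team_minus T s0)) => [[s0 H0]|Hn].
- by exists (s0 Y) => s Hs; apply: H.
- have [y _] := card_gt0P (HRan Y); exists y => s Hs; case: Hn; by exists s.
Qed.

Lemma bigAnd_inst {V : finType} {Ran : V -> finType} (T : team Ran) r : forall u,
  (forall s, team_minus T s -> sats s (u :: r)) ->
  exists a, full_inst (bigAnd (lit_atom u) (map (@lit_atom _ _) r)) a /\ sat_co T a.
Proof.
elim: r => [|v r IH] u H /=.
- exists (CEq (tagged u)); split; first exact: FI_Eq.
  move=> s Hs; apply: (H s Hs); exact: mem_head.
- have [a [Ha Hsat]] : exists a, full_inst (bigAnd (lit_atom v) (map (@lit_atom _ _) r)) a /\ sat_co T a.
    apply: IH => s Hs w Hw; apply: (H s Hs); by rewrite inE Hw orbT.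
  exists (CAnd (CEq (tagged u)) a); split; first by apply: FI_And => //; exact: FI_Eq.
  split=> // s Hs; apply: (H s Hs); exact: mem_head.
Qed.

Lemma eqc_inst {V : finType} {Ran : V -> finType} (HRan : forall X : V, 0 < #|Ran X|)
  (T : team Ran) r Y :
  (forall s, team_minus T s -> sats s r) ->
  (forall s s', team_minus T s -> team_minus T s' -> s Y = s' Y) ->
  exists a, full_inst (eq_and_const r Y) a /\ sat_co T a.
Proof.
move=> Hr Hc; have [y Hy] := const_inst HRan Hc.
case: r Hr => [|u r] Hr /=.
- exists (CEq y); split; [exact: FI_Const | exact: Hy].
- have [a [Ha Hsat]] := bigAnd_inst Hr.
  exists (CAnd a (CEq y)); split; first by apply: FI_And => //; exact: FI_Const.
  by split.
Qed.

Lemma bigOr_inst {V : finType} {Ran : V -> finType} Y rs : forall (T : team Ran) r0,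
  (forall s, team_minus T s -> exists2 r, r \in r0 :: rs & sats s r) ->
  (forall r (T' : team Ran), r \in r0 :: rs -> (forall p, T' p -> T p) ->
     (forall s, team_minus T' s -> sats s r) ->
     exists a, full_inst (eq_and_const r Y) a /\ sat_co T' a) ->
  exists a, full_inst (bigOr (eq_and_const r0 Y) (map (fun r' => eq_and_const r' Y) rs)) a
            /\ sat_co T a.
Proof.
elim: rs => [|r1 rs IH] T r0 Hcov Hinst /=.
- apply: (Hinst r0 T) => //; first exact: mem_head.
  move=> s Hs; case: (Hcov s Hs) => r; rewrite inE => /eqP -> //.
- pose T1 := fun p : assign Ran * system Ran => T p /\ sats p.1 r0.
  pose T2 := fun p : assign Ran * system Ran => T p /\ ~ sats p.1 r0.
  have [a1 [H1 S1]] : exists a, full_inst (eq_and_const r0 Y) a /\ sat_co T1 a.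
    apply: (Hinst r0 T1); first exact: mem_head.
    - by move=> p [].
    - by move=> s [F [_ H]].
  have [a2 [H2 S2]] : exists a, full_inst (bigOr (eq_and_const r1 Y)
        (map (fun r' => eq_and_const r' Y) rs)) a /\ sat_co T2 a.
    apply: IH.
    - move=> s [F [TF Hn]]; case: (Hcov s (ex_intro _ F TF)) => r.
      rewrite inE => /orP [/eqP -> //|Hr Hsr]; by exists r.
    - move=> r T' Hr Hsub Hs; apply: (Hinst r T') => //.
      + by rewrite inE Hr orbT.
      + by move=> p /Hsub [].
  exists (COr a1 a2); split; first exact: FI_Or.
  exists T1, T2; split=> // p; split.
  + move=> Tp; case: (classic (sats p.1 r0)) => H; [left|right]; by split.
  + by case=> [][].
Qed.

Lemma ranL_ne {V : finType} {Ran : V -> finType} (HRan : forall X : V, 0 < #|Ran X|)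
  (Xs : seq V) : exists r, r \in ranL Ran Xs.
Proof.
elim: Xs => [|X Xs [r Hr]] /=; first by exists [::]; rewrite inE.
have [x _] := card_gt0P (HRan X).
exists ((existT _ X x : lit Ran) :: r); apply/allpairsP; exists (x, r); by rewrite mem_enum.
Qed.

Lemma key {V : finType} {Ran : V -> finType} (HRan : forall X : V, 0 < #|Ran X|)
  (phi : cod Ran) : forall T, sat T phi -> exists a, full_inst (star phi) a /\ sat_co T a.
Proof.
elim: phi => [X x|Xs Y|a|p1 IH1 p2 IH2|p1 IH1 p2 IH2|l p1 IH] T.
- move=> H; exists (CEq x); split; [exact: FI_Eq | exact: H].
- case: Xs => [|X Xs] H.
  + have [y Hy] := const_inst HRan (fun s s' Hs Hs' => H s s' Hs Hs' (fun X (i : X \in [::]) => ltac:(by []))).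
    exists (CEq y); split; [exact: FI_Const | exact: Hy].
  + rewrite star_dep_eq.
    have Hcov : forall s, team_minus T s -> exists2 r, r \in ranL Ran (X :: Xs) & sats s r.
      move=> s _; exists (tup s (X :: Xs)); first exact: tup_ranL.
      by move=> u /mapP [Z _ ->].
    have Hinst : forall r (T' : team Ran), r \in ranL Ran (X :: Xs) -> (forall p, T' p -> T p) ->
       (forall s, team_minus T' s -> sats s r) ->
       exists a, full_inst (eq_and_const r Y) a /\ sat_co T' a.
      move=> r T' Hr Hsub Hs; apply: eqc_inst => // s s' Hs1 Hs1'.
      have Ht : team_minus T s by case: Hs1 => F /Hsub; exists F.
      have Ht' : team_minus T s' by case: Hs1' => F /Hsub; exists F.
      apply: H => // Z; rewrite -(ranL_tag Hr) => /mapP [u ur ->].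
      by rewrite (Hs s Hs1 u ur) (Hs s' Hs1' u ur).
    move: Hcov Hinst; case E: (ranL Ran (X :: Xs)) => [|r rs].
    * have [r Hr] := ranL_ne HRan (X :: Xs); by rewrite E in Hr.
    * move=> Hcov Hinst; exact: bigOr_inst.
- move=> H; exists (CNeg a); split; [exact: FI_Neg | exact: H].
- case=> /IH1 [a1 [F1 S1]] /IH2 [a2 [F2 S2]].
  exists (CAnd a1 a2); split; [exact: FI_And | by split].
- case=> [T1 [T2 [U [/IH1 [a1 [F1 S1]] /IH2 [a2 [F2 S2]]]]]].
  exists (COr a1 a2); split; first exact: FI_Or.
  by exists T1, T2.
- case=> [Hn|/IH [a1 [F1 S1]]].
  + have [a1 [F1 _]] := IH (fun _ => False) (empty_sat p1 (fun _ H => H)).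
    exists (CCf l a1); split; [exact: FI_Cf | by left].
  + exists (CCf l a1); split; [exact: FI_Cf | by right].
Qed.

Theorem corollary5p17 (V : finType) (Ran : V -> finType)
  (HV : 0 < #|V|) (HRan : forall X : V, 0 < #|Ran X|)
  (Delta : co Ran -> Prop) (phi : cod Ran) :
  entails Delta phi <->
  exists a : co Ran, full_inst (star phi) a /\ entails_co Delta a.
Proof.
split.
- move=> H.
  pose TD := fun p : assign Ran * system Ran =>
    (wf_system p.2 /\ compatible p.1 p.2) /\ forall b, Delta b -> sat_co (fun q => q = p) b.
  have gTD : gct TD by move=> p [].
  have sTD : forall b, Delta b -> sat_co TD b.
    by move=> b Db; rewrite flat => p [_ Hp]; apply: Hp.
  have [a [Fa Sa]] := key HRan (H TD gTD sTD).
  exists a; split=> // T gT HT.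
  rewrite flat => p Tp; move: Sa; rewrite flat; apply.
  split; first exact: gT.
  move=> b Db; move: (HT b Db); rewrite flat; apply; exact: Tp.
- move=> [a [Fa Ea]] T gT HT; apply: star_sound; apply: (inst_sound Fa).
  exact: Ea.
Qed.
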